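(* For every integer $k\ge 0$, as $n\to\infty$, \[ \langle S_{2,n}^{-k}\rangle\sim\left(\frac{n}{4}\right)^{-k}. \]
   Context: For $n\ge 1$, let $\Omega_n$ be the set of rooted plane (ordered) full binary trees with $n$ leaves (every internal node has exactly two children, left and right distinguished). The random model is $\Omega_n$ with the uniform probability measure $P_n$; $\langle\cdot\rangle$ denotes expectation with respect to $P_n$. Horton–Strahler ordering: every leaf has order 1; an internal node whose two children have different orders $r_1\neq r_2$ has order $\max\{r_1,r_2\}$; an internal node whose two children both have order $r$ has order $r+1$. A branch of order $r$ is a maximal connected path consisting of nodes all of order $r$. $S_{2,n}(\tau)$ is the number of branches of order $2$ in $\tau\in\Omega_n$; for $n\ge 2$ one has $S_{2,n}\ge 1$. For sequences, $a_n\sim b_n$ means $\lim_{n\to\infty}a_n/b_n=1$. *)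

(* Defs.v *)
From HB Require Import structures.
From mathcomp Require Import all_boot all_order all_algebra.
From mathcomp Require Import all_classical all_reals all_analysis.
Set Implicit Arguments. Unset Strict Implicit. Unset Printing Implicit Defensive.
Import Order.TTheory GRing.Theory Num.Theory.

Inductive btree : Type := Leaf : btree | Node : btree -> btree -> btree.

Fixpoint leaves (t : btree) : nat :=
  match t with Leaf => 1 | Node l r => leaves l + leaves r end.

Fixpoint hs (t : btree) : nat :=
  match t with
  | Leaf => 1
  | Node l r => let a := hs l in let b := hs r in
                if a == b then a.+1 else maxn a b
  end.

(* Nodes of order r form vertical paths (a node has at most one child of its
   own order).  Each maximal such path (a branch of order r) is identified by
   its top node: a node of order r whose parent is not of order r (or which is
   the root).  [branches_aux r p t] counts these top nodes in the subtree t,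
   where p is the order of the parent of t (p = 0 for the root). *)
Fixpoint branches_aux (r p : nat) (t : btree) : nat :=
  ((hs t == r) && (p != r)) +
  match t with
  | Leaf => 0
  | Node l rt => branches_aux r (hs t) l + branches_aux r (hs t) rt
  end.

Definition branches (r : nat) (t : btree) : nat := branches_aux r 0 t.

Definition S2 (t : btree) : nat := branches 2 t.

(* Enumeration of all trees with exactly n leaves (each exactly once);
   m is fuel (depth m >= n suffices). *)
Fixpoint trees_aux (m n : nat) : seq btree :=
  match m with
  | 0 => [::]
  | m'.+1 =>
      if n == 1 then [:: Leaf]
      else flatten [seq [seq Node l r | l <- trees_aux m' i, r <- trees_aux m' (n - i)]
                   | i <- iota 1 n.-1]
  end.

Definition Omega (n : nat) : seq btree := trees_aux n n.

Local Open Scope ring_scope.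

Definition expect_n (R : realType) (n : nat) (X : btree -> R) : R :=
  (\sum_(t <- Omega n) X t) / (size (Omega n))%:R.

(* Main.v *)
Require Import Defs.
From HB Require Import structures.
From mathcomp Require Import all_boot all_order all_algebra.
From mathcomp Require Import all_classical all_reals all_analysis.
From mathcomp Require Import zify ring lra.
Import Order.TTheory GRing.Theory Num.Theory.
Import numFieldNormedType.Exports.
Set Implicit Arguments. Unset Strict Implicit. Unset Printing Implicit Defensive.

Definition isLeaf (t : btree) := if t is Leaf then true else false.
Fixpoint ch (t : btree) : nat :=
  match t with Leaf => 0 | Node l r => ch l + ch r + (isLeaf l && isLeaf r) end.

Lemma hs_ge1 t : 1 <= hs t.
Proof.
elim: t => //= l IHl r IHr; case: ifP => [/eqP e|ne]; first by lia.
rewrite leq_max IHl //.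
Qed.

Lemma hs_eq1 t : (hs t == 1) = isLeaf t.
Proof.
case: t => //= l r; have h1 := hs_ge1 l; have h2 := hs_ge1 r.
case: ifP => [/eqP e|/negbT ne]; first by lia.
apply/negbTE; move: ne; rewrite /maxn; case: ltnP => ? ?; lia.
Qed.

Lemma helper_hs a b : 1 <= a -> 1 <= b ->
  let h := if a == b then a.+1 else maxn a b in
  ((a==2) && (h != 2)) + ((b==2) && (h!=2)) + (h==2)
  = (a==2) + (b==2) + ((a==1)&&(b==1)).
Proof.
move=> ha hb /=.
case: a ha => [|[|[|a]]] // _; case: b hb => [|[|[|b]]] // _ //=;
 rewrite ?eqSS /maxn; repeat case: ifP => //=.
Qed.

Lemma branches_ch t p :
  branches_aux 2 p t + (hs t == 2) = ch t + ((hs t == 2) && (p != 2)).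
Proof.
elim: t p => [|l IHl r IHr] p //=.
have := helper_hs (hs_ge1 l) (hs_ge1 r).
rewrite !hs_eq1 /=.
set h := (if hs l == hs r then _ else _).
have := IHl h; have := IHr h. lia.
Qed.

Lemma S2_ch t : S2 t = ch t.
Proof. have := branches_ch t 0; rewrite /S2 /branches; lia. Qed.

Fixpoint beq (t u : btree) : bool :=
  match t, u with
  | Leaf, Leaf => true
  | Node a b, Node c d => beq a c && beq b d
  | _, _ => false
  end.
Lemma beqP : Equality.axiom beq.
Proof.
elim=> [|a IHa b IHb] [|c d] /=; try by constructor.
apply: (iffP andP) => [[/IHa -> /IHb ->]|[<- <-]] //.
by split; [apply/IHa|apply/IHb].
Qed.
HB.instance Definition _ := hasDecEq.Build btree beqP.

Lemma trees_auxS m n : trees_aux m.+1 n = if n == 1 then [:: Leaf] else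
  flatten [seq [seq Node l r | l <- trees_aux m i, r <- trees_aux m (n - i)] | i <- iota 1 n.-1].
Proof. by []. Qed.

Lemma fuel m n : n <= m -> trees_aux m.+1 n = trees_aux m n.
Proof.
elim: m n => [|m IH] n hn; first by case: n hn.
rewrite trees_auxS [RHS]trees_auxS; case: ifP => // _.
congr flatten; apply/eq_in_map => i; rewrite mem_iota => /andP[h1 h2].
rewrite !IH //; lia.
Qed.

Lemma fuel' m n : n <= m -> trees_aux m n = Omega n.
Proof.
elim: m => [|m IH] hn; first by case: n hn.
case: (ltnP n m.+1) => h; first by rewrite fuel // IH.
by have -> : n = m.+1 by lia.
Qed.

Lemma Omega_rec n : 1 < n -> Omega n =
  flatten [seq [seq Node l r | l <- Omega i, r <- Omega (n - i)] | i <- iota 1 n.-1].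
Proof.
move=> h; rewrite /Omega; case: n h => [|n] // h; rewrite trees_auxS ifN; last by lia.
congr flatten; apply/eq_in_map => i; rewrite mem_iota => /andP[h1 h2].
rewrite !fuel' //; lia.
Qed.

Lemma Omega1 : Omega 1 = [:: Leaf]. Proof. by []. Qed.
Lemma Omega2 : Omega 2 = [:: Node Leaf Leaf]. Proof. by []. Qed.

Lemma Omega_leaves n t : t \in Omega n -> leaves t = n.
Proof.
elim/ltn_ind: n t => n IH t.
case: n IH => [|[|n]] IH; first by [].
  by rewrite Omega1 inE => /eqP ->.
rewrite Omega_rec // => /flattenP [s /mapP [i]]; rewrite mem_iota => /andP[h1 h2] -> {s}.
case/allpairsP => [[l r]] /= [hl hr ->] /=.
rewrite (IH i) ?(IH (n.+2 - i)) //; lia.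
Qed.

Section Sums.
Variable R : realType.
Local Open Scope ring_scope.

Lemma sum_Omega (F : btree -> R) n : (1 < n)%N ->
  \sum_(t <- Omega n) F t =
  \sum_(1 <= i < n) \sum_(l <- Omega i) \sum_(r <- Omega (n - i)) F (Node l r).
Proof.
move=> hn; rewrite Omega_rec // big_flatten big_map /index_iota subn1.
by apply: eq_bigr => i _; rewrite big_allpairs_dep.
Qed.

End Sums.

Fixpoint ins (t : btree) : seq btree :=
  match t with
  | Leaf => [:: Node Leaf Leaf; Node Leaf Leaf]
  | Node l r => [:: Node Leaf (Node l r), Node (Node l r) Leaf
                 & [seq Node l' r | l' <- ins l] ++ [seq Node l r' | r' <- ins r]]
  end.

Section Chain.
Variable R : realType.
Local Open Scope ring_scope.

Lemma ins_sum n : (1 <= n)%N -> forall G : btree -> R,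
  \sum_(t <- Omega n) \sum_(u <- ins t) G u = n.+1%:R * \sum_(u <- Omega n.+1) G u.
Proof.
elim/ltn_ind: n => n IH hn G.
case: n IH hn => [|[|n]] IH hn //.
  by rewrite Omega1 Omega2 !big_cons !big_nil /=; lra.
set m := n.+2.
have hm : (1 < m)%N by [].
rewrite (sum_Omega _ hm).
have split3 : forall (f g : nat -> btree -> btree -> R),
  \sum_(1 <= i < m) \sum_(l <- Omega i) \sum_(r <- Omega (m - i)) (f i l r + g i l r) =
  \sum_(1 <= i < m) \sum_(l <- Omega i) \sum_(r <- Omega (m - i)) f i l r +
  \sum_(1 <= i < m) \sum_(l <- Omega i) \sum_(r <- Omega (m - i)) g i l r.
  move=> f g; rewrite -big_split; apply: eq_bigr => i _.
  rewrite -big_split; apply: eq_bigr => l _; by rewrite -big_split.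
transitivity (\sum_(1 <= i < m) \sum_(l <- Omega i) \sum_(r <- Omega (m - i))
   ((G (Node Leaf (Node l r)) + G (Node (Node l r) Leaf)) +
   (\sum_(l' <- ins l) G (Node l' r) + \sum_(r' <- ins r) G (Node l r')))).
  apply: eq_bigr => i _; apply: eq_bigr => l _; apply: eq_bigr => r _.
  by rewrite /= !big_cons big_cat !big_map addrA.
rewrite (split3 (fun i l r => G (Node Leaf (Node l r)) + G (Node (Node l r) Leaf))
   (fun i l r => \sum_(l' <- ins l) G (Node l' r) + \sum_(r' <- ins r) G (Node l r'))).
rewrite (split3 (fun i l r => G (Node Leaf (Node l r))) (fun i l r => G (Node (Node l r) Leaf))).
rewrite (split3 (fun i l r => \sum_(l' <- ins l) G (Node l' r)) (fun i l r => \sum_(r' <- ins r) G (Node l r'))).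
rewrite -(sum_Omega (fun t => G (Node Leaf t)) hm) -(sum_Omega (fun t => G (Node t Leaf)) hm).
have PC : \sum_(1 <= i < m) \sum_(l <- Omega i) \sum_(r <- Omega (m - i)) \sum_(l' <- ins l) G (Node l' r)
  = \sum_(1 <= i < m) i.+1%:R * \sum_(a <- Omega i.+1) \sum_(r <- Omega (m - i)) G (Node a r).
  apply: eq_big_nat => i /andP[h1 h2]; rewrite exchange_big /=.
  rewrite [in RHS]exchange_big /= mulr_sumr; apply: eq_bigr => r _.
  by rewrite (IH i h2 h1 (fun a => G (Node a r))).
have PD : \sum_(1 <= i < m) \sum_(l <- Omega i) \sum_(r <- Omega (m - i)) \sum_(r' <- ins r) G (Node l r')
  = \sum_(1 <= i < m) (m - i)%N.+1%:R * \sum_(l <- Omega i) \sum_(b <- Omega (m - i).+1) G (Node l b).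
  apply: eq_big_nat => i /andP[h1 h2]; rewrite mulr_sumr; apply: eq_bigr => l _.
  rewrite (IH (m - i)%N _ _ (fun b => G (Node l b))) //; lia.
rewrite PC PD (sum_Omega _ (_ : (1 < m.+1)%N)) // mulr_sumr.
set X := fun j => \sum_(l <- Omega j) \sum_(r <- Omega (m.+1 - j)) G (Node l r).
transitivity (\sum_(1 <= j < m.+1) (j%:R * X j + (m.+1 - j)%N%:R * X j)); last first.
  apply: eq_big_nat => j /andP[h1 h2]; rewrite -mulrDl -natrD subnKC //; lia.
rewrite big_split /=.
have E1 : \sum_(1 <= j < m.+1) j%:R * X j = \sum_(t <- Omega m) G (Node Leaf t) +
   \sum_(1 <= i < m) i.+1%:R * \sum_(a <- Omega i.+1) \sum_(r <- Omega (m - i)) G (Node a r).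
  rewrite big_ltn // big_add1 /= mul1r /X Omega1 big_cons big_nil addr0 subn1 /=; congr (_ + _).
have E2 : \sum_(1 <= j < m.+1) (m.+1 - j)%N%:R * X j = 
   \sum_(1 <= i < m) (m - i).+1%:R * \sum_(l <- Omega i) \sum_(b <- Omega (m - i).+1) G (Node l b)
   + \sum_(t <- Omega m) G (Node t Leaf).
  rewrite big_nat_recr //= subSnn mul1r /X subSnn Omega1; congr (_ + _).
    apply: eq_big_nat => i /andP[h1 h2]; rewrite subSn //; lia.
  by apply: eq_bigr => l _; rewrite big_cons big_nil addr0.
rewrite E1 E2; lra.
Qed.

Lemma ins_node t u : u \in ins t -> isLeaf u = false.
Proof.
case: t => [|l r] /=; first by rewrite !inE => /orP[] /eqP ->.
rewrite !inE => /orP[/eqP -> //|/orP[/eqP -> //|]].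
by rewrite mem_cat => /orP[] /mapP [x _ ->].
Qed.

Lemma ins_ch t (h : nat -> R) :
  \sum_(u <- ins t) h (ch u) =
  (2 * (leaves t)%:R - 2 + 4 * (ch t)%:R) * h (ch t) +
  (2 * (leaves t)%:R - 4 * (ch t)%:R) * h (ch t).+1.
Proof.
elim: t h => [|l IHl r IHr] h.
  rewrite /= !big_cons big_nil /=; lra.
rewrite [ins _]/= !big_cons big_cat !big_map.
rewrite (eq_big_seq (fun l' => h (ch l' + ch r)%N)); last first.
  by move=> l' /ins_node hl /=; rewrite hl /= addn0.
rewrite [X in _ + (_ + (_ + X))](eq_big_seq (fun r' => h (ch l + ch r')%N)); last first.
  by move=> r' /ins_node hr /=; rewrite hr andbF addn0.
rewrite (IHl (fun c => h (c + ch r)%N)) (IHr (fun c => h (ch l + c)%N)).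
have e1 : (ch l + 1 + ch r = ch l + ch r + 1)%N by lia.
rewrite addSn addnS; clear e1.
case: l IHl => [|l1 l2] IHl; case: r IHr => [|r1 r2] IHr;
  rewrite /= ?addn0 ?add0n ?natrD /=; lra.
Qed.

Lemma chain n (h : nat -> R) : (1 <= n)%N ->
  n.+1%:R * \sum_(u <- Omega n.+1) h (ch u) =
  \sum_(t <- Omega n) ((2 * n%:R - 2 + 4 * (ch t)%:R) * h (ch t) +
                       (2 * n%:R - 4 * (ch t)%:R) * h (ch t).+1).
Proof.
move=> hn; rewrite -(ins_sum hn); apply: eq_big_seq => t ht.
by rewrite ins_ch (Omega_leaves ht).
Qed.

End Chain.

Lemma ch_pos t : isLeaf t = false -> (0 < ch t)%N.
Proof.
elim: t => [|l IHl r IHr] //= _.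
case El: (isLeaf l); case Er: (isLeaf r) => /=.
- lia.
- have := IHr Er; lia.
- have := IHl El; lia.
- have := IHl El; lia.
Qed.

Lemma Omega_ch_pos n t : (2 <= n)%N -> t \in Omega n -> (1 <= ch t)%N.
Proof.
move=> hn ht; apply: ch_pos; move: (Omega_leaves ht).
case: t {ht} => //= e; lia.
Qed.

Section Ana.
Variable R : realType.
Local Open Scope ring_scope.

Definition W n : R := (size (Omega n))%:R.

Lemma W_sum n : \sum_(t <- Omega n) (1 : R) = W n.
Proof.
rewrite /W; elim: (Omega n) => [|a s IH]; first by rewrite big_nil.
by rewrite big_cons IH /= -addn1 natrD addrC.
Qed.

Lemma W_rec n : (1 <= n)%N -> n.+1%:R * W n.+1 = (4 * n%:R - 2) * W n.
Proof.
move=> hn; rewrite -!W_sum (chain (fun _ => (1:R)) hn) mulr_sumr.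
by apply: eq_bigr => t _; lra.
Qed.

Lemma W_gt0 n : (1 <= n)%N -> 0 < W n.
Proof.
elim: n => [|n IH] // _.
case: n IH => [|n] IH; first by rewrite /W Omega1.
have h := IH erefl; have := W_rec (n:=n.+1) erefl.
have hn : 0 < n.+2%:R :> R by rewrite ltr0n.
move=> e; have : 0 < n.+2%:R * W n.+2.
  by rewrite e; apply: mulr_gt0 => //; rewrite -natrM -[2]/(2%:R) natrS; lra.
by rewrite pmulr_rgt0.
Qed.

Lemma sumS_le n : (1 <= n)%N ->
  \sum_(t <- Omega n) ((ch t)%:R : R) <= (n%:R + 2) / 4 * W n.
Proof.
elim: n => [|n IH] // _.
case: n IH => [|n] IH.
  by rewrite Omega1 big_cons big_nil /W Omega1 /=; lra.
have IH' := IH erefl.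
have hW := W_gt0 (n:=n.+1) erefl.
have hc := chain (fun c => (c%:R : R)) (n:=n.+1) erefl.
have hW2 := W_rec (n:=n.+1) erefl.
have E : \sum_(t <- Omega n.+1) ((2 * n.+1%:R - 2 + 4 * (ch t)%:R) * (ch t)%:R +
                 (2 * n.+1%:R - 4 * (ch t)%:R) * (ch t).+1%:R)
       = (4 * n.+1%:R - 6) * \sum_(t <- Omega n.+1) ((ch t)%:R : R) + 2 * n.+1%:R * W n.+1.
  rewrite -W_sum mulr_sumr mulr_sumr -big_split /=; apply: eq_bigr => t _.
  rewrite -addn1 natrD; lra.
rewrite E in hc.
have hn2 : 0 < n.+2%:R :> R by rewrite ltr0n.
rewrite -(ler_pM2l hn2) hc.
have -> : n.+2%:R * ((n.+2%:R + 2) / 4 * W n.+2) = (n.+2%:R + 2) / 4 * (n.+2%:R * W n.+2) by ring.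
rewrite hW2.
have hnr : (n.+1%:R : R) = n%:R + 1 by rewrite -addn1 natrD.
have hnr2 : (n.+2%:R : R) = n%:R + 2 by rewrite -addn2 natrD.
rewrite hnr2 hnr in IH' *.
have hS : 0 <= \sum_(t <- Omega n.+1) ((ch t)%:R : R) by apply: sumr_ge0.
case: n IH' hS {IH hc E hW2 hnr hnr2 hn2} hW => [|n] IH' hS hW.
  rewrite /=; lra.
have h0 : 1 <= (n.+1%:R : R) by rewrite ler1n.
nra.
Qed.


Lemma sumX_rec n (x : R) : (1 <= n)%N -> 0 <= x -> x <= 1 ->
  n.+1%:R * \sum_(u <- Omega n.+1) x ^+ ch u <=
  (3 * n%:R + n%:R * x - 2 * x) * \sum_(t <- Omega n) x ^+ ch t.
Proof.
move=> hn hx0 hx1.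
rewrite (chain (fun c => x ^+ c) hn).
set M := (n%:R + 2) / 4 : R.
set K := ((n + 2) %/ 4)%N.
have key : \sum_(t <- Omega n) (ch t)%:R * x ^+ ch t <= M * \sum_(t <- Omega n) x ^+ ch t.
  apply: (@le_trans _ _ (\sum_(t <- Omega n) (M * x ^+ ch t + x ^+ K * ((ch t)%:R - M)))).
    apply: ler_sum => t _.
    have hK1 : (K%:R : R) <= M.
      have : (4 * K <= n + 2)%N by rewrite /K; lia.
      rewrite -(ler_nat R) natrM natrD /M => h; lra.
    have hK2 : M < (K.+1%:R : R).
      have : (n + 2 < 4 * K.+1)%N by rewrite /K; lia.
      rewrite -(ltr_nat R) natrM natrD /M => h; lra.
    case: (leqP (ch t) K) => hc.
      have h1 : x ^+ K <= x ^+ ch t by apply: ler_wiXn2l.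
      have h2 : ((ch t)%:R : R) <= K%:R by rewrite ler_nat.
      nra.
    have h1 : x ^+ ch t <= x ^+ K by apply: ler_wiXn2l => //; lia.
    have h2 : (K.+1%:R : R) <= (ch t)%:R by rewrite ler_nat.
    nra.
  rewrite big_split /= -mulr_sumr -mulr_sumr sumrB.
  have -> : \sum_(i <- Omega n) M = M * W n by rewrite -W_sum mulr_sumr; apply: eq_bigr => *; rewrite mulr1.
  have hS := sumS_le hn.
  have hxK : 0 <= x ^+ K by apply: exprn_ge0.
  rewrite -/M in hS; nra.
have E : \sum_(t <- Omega n) ((2 * n%:R - 2 + 4 * (ch t)%:R) * x ^+ ch t +
                       (2 * n%:R - 4 * (ch t)%:R) * x ^+ (ch t).+1)
   = (2 * n%:R - 2 + 2 * n%:R * x) * \sum_(t <- Omega n) x ^+ ch t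
     + 4 * (1 - x) * \sum_(t <- Omega n) (ch t)%:R * x ^+ ch t.
  rewrite !mulr_sumr -big_split /=; apply: eq_bigr => t _; rewrite exprS; ring.
rewrite E.
have hx : 0 <= 4 * (1 - x) by lra.
have := ler_wpM2l hx key.
rewrite /M; lra.
Qed.

End Ana.

Section Ineq.
Variable R : realType.
Local Open Scope ring_scope.

Lemma natbig (x : R) : exists N : nat, x <= N%:R.
Proof.
have h0 : 0 <= Num.max x 0 by rewrite le_max lexx orbT.
have := @archi_boundP R _ h0.
move=> h; exists (Num.bound (Num.max x 0)); apply: ltW; apply: le_lt_trans h.
by rewrite le_max lexx.
Qed.

Lemma bern (h : R) n : -1 <= h -> 1 + n%:R * h <= (1 + h) ^+ n.
Proof.
move=> hh; elim: n => [|n IH]; first by rewrite mul0r expr0 addr0.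
rewrite exprS -addn1 natrD.
have h1 : 0 <= 1 + h by lra.
have := ler_wpM2l h1 IH.
have : 0 <= (n%:R : R) * h * h by rewrite -mulrA mulr_ge0 // -expr2 sqr_ge0.
nra.
Qed.

Lemma powup (a : R) k : 0 <= a -> a <= 1 -> (1 + a) ^+ k <= 1 + a * k%:R * 2 ^+ k.
Proof.
move=> a0 a1; elim: k => [|k IH]; first by rewrite expr0 mulr0 mul0r addr0.
rewrite exprS [2 ^+ k.+1]exprS -addn1 natrD.
have h1 : 0 <= 1 + a by lra.
have := ler_wpM2l h1 IH.
have h2 : 1 <= (2 : R) ^+ k by apply: exprn_ege1; lra.
have h3 : 0 <= (k%:R : R) by [].
have h4 : a * (k%:R * 2 ^+ k) * a <= a * (k%:R * 2 ^+ k).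
  rewrite -[X in _ <= X]mulr1; apply: ler_wpM2l => //.
  by apply: mulr_ge0 => //; apply: mulr_ge0 => //; lra.
nra.
Qed.

Lemma geo (r : R) j : 0 <= r -> r <= 1 -> r ^+ j * (1 + j%:R * (1 - r)) <= 1.
Proof.
move=> r0 r1; elim: j => [|j IH]; first by rewrite expr0 mul0r addr0 mulr1.
rewrite exprSr -addn1 natrD.
have hj : 0 <= r ^+ j by apply: exprn_ge0.
have e : r ^+ j * r * (1 + (j%:R + 1%:R) * (1 - r)) =
   r ^+ j * (1 + j%:R * (1 - r)) - r ^+ j * ((j%:R + 1) * (1 - r) ^+ 2) by ring.
rewrite e.
have : 0 <= r ^+ j * ((j%:R + 1) * (1 - r) ^+ 2).
  by apply: mulr_ge0 => //; apply: mulr_ge0; [apply: addr_ge0|apply: sqr_ge0].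
lra.
Qed.

Lemma polygeo (q : R) k e : 0 <= q -> q < 1 -> 0 < e ->
  exists N, forall n, (N <= n)%N -> n%:R ^+ k * q ^+ n <= e.
Proof.
move=> q0 q1 e0.
set r := (1 + q) / 2.
have [N1' hN1'] := natbig (2 * k%:R * 2 ^+ k / (1 - q)).
set N1 := N1'.+1.
have step : forall n, (N1 <= n)%N ->
    n.+1%:R ^+ k * q ^+ n.+1 <= r * (n%:R ^+ k * q ^+ n).
  move=> n hn.
  have n0 : 0 < (n%:R : R) by rewrite ltr0n; lia.
  have hN : (N1'%:R : R) + 1 <= n%:R by rewrite natr1 ler_nat; lia.
  set a := (n%:R : R)^-1.
  have a0 : 0 <= a by rewrite invr_ge0 ltW.
  have a1 : a <= 1 by rewrite invf_le1 // ler1n; lia.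
  have hp := powup k a0 a1.
  have E : (n.+1%:R : R) ^+ k = n%:R ^+ k * (1 + a) ^+ k.
    by rewrite -exprMn /a -natr1; congr (_ ^+ _); field; lra.
  have hk : a * k%:R * 2 ^+ k <= (1 - q) / 2.
    have h2 : 0 < 1 - q by lra.
    have : 2 * k%:R * 2 ^+ k <= (N1'%:R) * (1 - q).
      by rewrite -ler_pdivrMr.
    move=> h.
    have -> : a * k%:R * 2 ^+ k = (k%:R * 2 ^+ k) / n%:R by rewrite /a; field; lra.
    rewrite ler_pdivrMr //.
    nra.
  have P0 : 0 <= n%:R ^+ k * q ^+ n by apply: mulr_ge0; apply: exprn_ge0.
  rewrite E exprS.
  have -> : n%:R ^+ k * (1 + a) ^+ k * (q * q ^+ n) = (n%:R ^+ k * q ^+ n) * ((1 + a) ^+ k * q) by ring.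
  have H : (1 + a) ^+ k * q <= r.
    have : (1 + a) ^+ k * q <= (1 + a * k%:R * 2 ^+ k) * q by apply: ler_wpM2r.
    rewrite /r; nra.
  rewrite [X in _ <= X]mulrC; nra.
set A := N1%:R ^+ k * q ^+ N1 : R.
have iter : forall j, (N1 + j)%:R ^+ k * q ^+ (N1 + j) <= A * r ^+ j.
  elim=> [|j IH]; first by rewrite addn0 expr0 mulr1.
  rewrite addnS; apply: le_trans (step _ _) _; first lia.
  have r0 : 0 <= r by rewrite /r; lra.
  rewrite exprS; nra.
have A0 : 0 <= A by apply: mulr_ge0; apply: exprn_ge0.
have s0 : 0 < 1 - r by rewrite /r; lra.
have [J hJ] := natbig (A / (e * (1 - r))).
exists (N1 + J)%N => n hn.
have -> : n = (N1 + (n - N1))%N by lia.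
apply: le_trans (iter _) _.
set j := (n - N1)%N.
have hj : (J%:R : R) <= j%:R by rewrite ler_nat; lia.
have hg := geo j (_ : 0 <= r) (_ : r <= 1).
have rj0 : 0 <= r ^+ j by apply: exprn_ge0; rewrite /r; lra.
have es : 0 < e * (1 - r) by apply: mulr_gt0.
rewrite ler_pdivrMr // in hJ.
have hA : A <= j%:R * (e * (1 - r)).
  apply: le_trans hJ _; apply: ler_wpM2r => //; exact: ltW.
have r0 : 0 <= r by rewrite /r; lra.
have r1 : r <= 1 by rewrite /r; lra.
have hg1 := geo j r0 r1.
have p1 : 0 <= (j%:R * (e * (1 - r)) - A) * r ^+ j by apply: mulr_ge0 => //; lra.
have p2 : 0 <= e * (1 - r ^+ j * (1 + j%:R * (1 - r))) by apply: mulr_ge0; lra.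
nra.
Qed.

End Ineq.

Section Bounds.
Variable R : realType.
Local Open Scope ring_scope.

Lemma tangent (s M : R) k : 0 < s -> 0 < M ->
  M ^- k * (k.+1%:R - k%:R * s / M) <= s ^- k.
Proof.
move=> s0 M0.
set u := M / s.
have u0 : 0 < u by apply: divr_gt0.
have b := @bern R (u - 1) k.+1.
have hu : k.+1%:R - k%:R * s / M <= u ^+ k.
  have e : k%:R * s / M = k%:R / u by rewrite /u; field; apply/andP; split; apply: lt0r_neq0.
  rewrite e -(ler_pM2l u0).
  have -> : u * (k.+1%:R - k%:R / u) = 1 + k.+1%:R * (u - 1).
    rewrite -natr1; field; exact: lt0r_neq0.
  rewrite -exprS; apply: le_trans (b _) _; first by lra.
  by rewrite addrC subrK.
have -> : s ^- k = M ^- k * u ^+ k.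
  rewrite /u expr_div_n; field; apply/andP; split; apply: expf_neq0; exact: lt0r_neq0.
apply: ler_wpM2l => //; rewrite invr_ge0; apply: exprn_ge0; exact: ltW.
Qed.

Lemma lower n k : (2 <= n)%N ->
  ((n%:R + 2) / 4) ^- k * W R n <= \sum_(t <- Omega n) ((ch t)%:R : R) ^- k.
Proof.
move=> hn; set M := (n%:R + 2) / 4 : R.
have M0 : 0 < M by rewrite /M; apply: divr_gt0 => //; apply: ltr_wpDl.
apply: (@le_trans _ _ (\sum_(t <- Omega n) M ^- k * (k.+1%:R - k%:R * (ch t)%:R / M))).
  rewrite -mulr_sumr; apply: ler_wpM2l.
    rewrite invr_ge0; apply: exprn_ge0; exact: ltW.
  rewrite sumrB -W_sum.
  have -> : \sum_(t <- Omega n) (k%:R * (ch t)%:R / M) = k%:R / M * \sum_(t <- Omega n) ((ch t)%:R : R).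
    by rewrite mulr_sumr; apply: eq_bigr => t _; rewrite mulrAC.
  have -> : \sum_(t <- Omega n) (k.+1%:R : R) = k.+1%:R * \sum_(t <- Omega n) (1 : R).
    by rewrite mulr_sumr; apply: eq_bigr => *; rewrite mulr1.
  rewrite W_sum.
  have hS := sumS_le R (_ : (1 <= n)%N); rewrite -/M in hS.
  have hS' := hS (ltnW hn).
  have hk : 0 <= k%:R / M by apply: divr_ge0 => //; exact: ltW.
  have := ler_wpM2l hk hS'.
  have -> : k%:R / M * (M * W R n) = k%:R * W R n by field; exact: lt0r_neq0.
  rewrite -natr1; lra.
rewrite big_seq [X in _ <= X]big_seq; apply: ler_sum => t ht.
apply: tangent => //; rewrite ltr0n; exact: Omega_ch_pos ht.
Qed.


Lemma c_inv_le1 (c : nat) k : (c%:R : R) ^- k <= 1.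
Proof.
case: c => [|c].
  case: k => [|k]; first by rewrite expr0 invr1.
  by rewrite expr0n /= invr0.
rewrite invf_le1; last by apply: exprn_gt0; rewrite ltr0n.
by apply: exprn_ege1; rewrite ler1n.
Qed.

Lemma upper_pt (c n D : nat) (w : R) k : (1 <= D)%N -> (1 <= n)%N -> 0 < w -> w <= 1 ->
  (c%:R : R) ^- k <= (D%:R * n%:R / (4 * D.+1%:R)) ^- k + (w ^+ (4 * D.+1)) ^+ c / w ^+ (D * n).
Proof.
move=> hD hn w0 w1.
set B := D%:R * n%:R / (4 * D.+1%:R) : R.
have B0 : 0 < B.
  rewrite /B; apply: divr_gt0; last by rewrite -natrM ltr0n.
  by apply: mulr_gt0; rewrite ltr0n.
have wD : 0 < w ^+ (D * n) by apply: exprn_gt0.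
have T2 : 0 <= (w ^+ (4 * D.+1)) ^+ c / w ^+ (D * n).
  by apply: divr_ge0; [apply: exprn_ge0; apply: exprn_ge0; exact: ltW| exact: ltW].
have T1 : 0 <= B ^- k by rewrite invr_ge0; apply: exprn_ge0; exact: ltW.
case: (leqP (D * n) (4 * D.+1 * c)) => h.
  have hBc : B <= c%:R.
    rewrite /B ler_pdivrMr; last by rewrite -natrM ltr0n.
    have : ((D * n)%N%:R : R) <= (4 * D.+1 * c)%N%:R by rewrite ler_nat.
    rewrite !natrM; lra.
  have c0 : 0 < (c%:R : R) by apply: lt_le_trans hBc.
  have : (c%:R : R) ^- k <= B ^- k.
    rewrite lef_pV2 ?posrE ?exprn_gt0 //.
    by apply: lerXn2r => //; rewrite nnegrE ltW.
  lra.
have h1 : 1 <= (w ^+ (4 * D.+1)) ^+ c / w ^+ (D * n).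
  rewrite ler_pdivlMr // mul1r -exprM.
  apply: ler_wiXn2l => //; [exact: ltW|lia].
have := c_inv_le1 c k.
lra.
Qed.

Definition Gs n (x : R) := \sum_(t <- Omega n) x ^+ ch t.

Lemma Gs_ge0 n x : 0 <= x -> 0 <= Gs n x.
Proof. by move=> x0; apply: sumr_ge0 => t _; apply: exprn_ge0. Qed.

Lemma Gs_leW n x : 0 <= x -> x <= 1 -> Gs n x <= W R n.
Proof.
move=> x0 x1; rewrite -W_sum; apply: ler_sum => t _; exact: exprn_ile1.
Qed.

Lemma Gstep n (x y : R) : (1 <= n)%N -> 0 <= x -> x <= 1 ->
  3 * n%:R + n%:R * x - 2 * x <= y * (4 * n%:R - 2) ->
  Gs n.+1 x / W R n.+1 <= y * (Gs n x / W R n).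
Proof.
move=> hn x0 x1 hy.
have p0 := W_gt0 R (ltn0Sn n).
have q0 := W_gt0 R hn.
have hX := sumX_rec hn x0 x1; rewrite -/(Gs _ _) -/(Gs _ _) in hX.
have hWr := W_rec R hn.
have b0 := Gs_ge0 n x0.
have n0 : 0 < (n.+1%:R : R) by rewrite ltr0n.
set a := Gs n.+1 x in hX *; set b := Gs n x in hX b0 *.
set p := W R n.+1 in p0 hWr *; set q := W R n in q0 hWr *.
have k1 : n.+1%:R * a <= y * (4 * n%:R - 2) * b.
  have k0 := ler_wpM2r b0 hy; exact: le_trans hX k0.
have k2 : n.+1%:R * (a * q) <= n.+1%:R * (y * b * p).
  have -> : n.+1%:R * (y * b * p) = y * b * (n.+1%:R * p) by ring.
  rewrite hWr.
  have := ler_wpM2r (ltW q0) k1; rewrite mulrA.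
  have -> : y * b * ((4 * n%:R - 2) * q) = y * (4 * n%:R - 2) * b * q by ring.
  done.
rewrite ler_pM2l // in k2.
rewrite ler_pdivrMr //.
have -> : y * (b / q) * p = (y * b * p) / q by field; exact: lt0r_neq0.
by rewrite ler_pdivlMr.
Qed.

Lemma Giter N0 (x y : R) : (1 <= N0)%N -> 0 <= x -> x <= 1 -> 0 <= y ->
  (forall n, (N0 <= n)%N -> 3 * n%:R + n%:R * x - 2 * x <= y * (4 * n%:R - 2)) ->
  forall j, Gs (N0 + j) x / W R (N0 + j) <= y ^+ j.
Proof.
move=> hN x0 x1 y0 hy; elim=> [|j IH].
  rewrite addn0 expr0 ler_pdivrMr ?mul1r; last exact: W_gt0.
  exact: Gs_leW.
rewrite addnS; apply: le_trans (Gstep _ x0 x1 (hy _ _)) _; try lia.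
rewrite exprS; have k0 := ler_wpM2l y0 IH; exact: k0.
Qed.

End Bounds.

Local Open Scope classical_set_scope.
Local Open Scope ring_scope.

Lemma cvg_from_eps (R : realType) (f : nat -> R) :
  (forall e, 0 < e -> exists N, forall n, (N <= n)%N -> 1 - e <= f n <= 1 + e) -> f @ \oo --> (1 : R).
Proof.
move=> H; apply/cvgrPdist_le => e e0; have [N hN] := H e e0.
near=> n.
have hn : (N <= n)%N by near: n; exact: nbhs_infty_ge.
have /andP[h1 h2] := hN n hn.
rewrite ler_norml; apply/andP; split; lra.
Unshelve. all: by end_near.
Qed.

Lemma params (R : realType) (D : nat) : (1 <= D)%N ->
  let dd : R := D.+1%:R in
  let tau := (8 * dd ^+ 2)^-1 in
  let w := 1 - tau in
  let x := w ^+ (4 * D.+1) in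
  let th := (16 * dd)^-1 in
  let y := 1 - (1 - x) * (4^-1 - th) in
  [/\ 0 < w, w <= 1, 0 <= x <= 1, 0 < y & y < w ^+ D] /\
  forall n, (6 * D.+1 + 1 <= n)%N -> 3 * n%:R + n%:R * x - 2 * x <= y * (4 * n%:R - 2).
Proof.
move=> hD dd tau w x th y.
have dd2 : 2 <= dd by rewrite /dd ler_nat; lia.
have t0 : 0 < tau by rewrite /tau invr_gt0; apply: mulr_gt0 => //; apply: exprn_gt0; lra.
have t1 : tau * (8 * dd ^+ 2) = 1 by rewrite /tau mulVf //; apply: lt0r_neq0; apply: mulr_gt0 => //; apply: exprn_gt0; lra.
have t2 : tau <= 1 by nra.
have w0 : 0 < w by rewrite /w; nra.
have w1 : w <= 1 by rewrite /w; lra.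
have x0 : 0 <= x by apply: exprn_ge0; exact: ltW.
have x1 : x <= 1 by apply: exprn_ile1 => //; exact: ltW.
have th0 : 0 < th by rewrite /th invr_gt0; apply: mulr_gt0 => //; lra.
have th1 : th * (16 * dd) = 1 by rewrite /th mulVf //; apply: lt0r_neq0; apply: mulr_gt0 => //; lra.
have th2 : th <= 4^-1 by nra.
have dd0 : dd != 0 by apply: lt0r_neq0; lra.
split; last first.
  move=> n hn.
  have hn' : 6 * dd + 1 <= n%:R.
    have : ((6 * D.+1 + 1)%N%:R : R) <= n%:R by rewrite ler_nat.
    by rewrite natrD natrM.
  have e : y * (4 * n%:R - 2) - (3 * n%:R + n%:R * x - 2 * x) = (1 - x) * (th * (4 * n%:R - 2) - 3 / 2).
    by rewrite /y; field.
  have e2 : th * (4 * n%:R - 2) - 3 / 2 = th * (4 * n%:R - 2 - 24 * dd).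
    by rewrite /th; field.
  have : 0 <= (1 - x) * (th * (4 * n%:R - 2) - 3 / 2).
    by rewrite e2; apply: mulr_ge0; [lra|apply: mulr_ge0; lra].
  lra.
have hwD : 1 - D%:R * tau <= w ^+ D.
  have ht : -1 <= - tau by lra.
  have := @bern R (- tau) D ht; rewrite /w; lra.
have hDd : (D%:R : R) = dd - 1 by rewrite /dd -natr1; ring.
have hx : x * (1 + 4 * dd * tau) <= 1.
  have ht : -1 <= tau by lra.
  have hb := @bern R tau (4 * D.+1) ht.
  rewrite natrM -/dd in hb.
  have := ler_wpM2l x0 hb.
  have -> : x * (1 + tau) ^+ (4 * D.+1) = (1 - tau ^+ 2) ^+ (4 * D.+1).
    by rewrite /x /w -exprMn; congr (_ ^+ _); ring.
  have : (1 - tau ^+ 2) ^+ (4 * D.+1) <= 1.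
    apply: exprn_ile1; last by have := sqr_ge0 tau; lra.
    rewrite subr_ge0 -[X in _ <= X](expr1n _ 2); apply: lerXn2r; rewrite ?nnegrE; lra.
  move=> h1 h2; exact: le_trans h2 h1.
set a := 1 - x.
have ha' : 1 <= a * (2 * dd + 1).
  have h1 : x * (1 + 4 * dd * tau) * (2 * dd) <= 2 * dd by nra.
  have -> : a * (2 * dd + 1) = 2 * dd + 1 - x * (1 + 4 * dd * tau) * (2 * dd).
    by rewrite /a /tau; field.
  lra.
have key : 16 * dd ^+ 2 * (a * (4^-1 - th) - (dd - 1) * tau) = a * (4 * dd ^+ 2 - dd) - 2 * (dd - 1).
  by rewrite /th /tau; field.
have a0 : 0 < a.
  case: (ltrP 0 a) => // ha0.
  have : a * (2 * dd + 1) <= 0 by apply: mulr_le0_ge0 => //; lra.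
  lra.
have pos : 0 < a * (4 * dd ^+ 2 - dd) - 2 * (dd - 1).
  have -> : a * (4 * dd ^+ 2 - dd) - 2 * (dd - 1) = 2 * (dd - 1) * (a * (2 * dd + 1) - 1) + a * (dd + 2) by ring.
  have p1 : 0 <= 2 * (dd - 1) * (a * (2 * dd + 1) - 1) by apply: mulr_ge0; lra.
  have p2 : 0 < a * (dd + 2) by apply: mulr_gt0 => //; lra.
  lra.
rewrite -key in pos.
have pos' : 0 < a * (4^-1 - th) - (dd - 1) * tau.
  by move: pos; rewrite pmulr_rgt0 //; apply: mulr_gt0 => //; apply: exprn_gt0; lra.
split => //.
- by rewrite x0 x1.
- rewrite /y -/a; have : 0 <= a <= 1 by rewrite /a; apply/andP; split; lra.
  move=> /andP[a0' a1]; nra.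
- apply: lt_le_trans hwD; rewrite /y -/a hDd; lra.
Qed.

Lemma params' (R : realType) (D : nat) : (1 <= D)%N ->
  exists w y : R, [/\ 0 < w, w <= 1, 0 < y, y < w ^+ D &
  forall n, (6 * D.+1 + 1 <= n)%N ->
    3 * n%:R + n%:R * w ^+ (4 * D.+1) - 2 * w ^+ (4 * D.+1) <= y * (4 * n%:R - 2)].
Proof.
move=> hD; have [[w0 w1 _ y0 yw] hy] := params R hD.
by eexists; eexists; split; [exact: w0|exact: w1|exact: y0|exact: yw|exact: hy].
Qed.

Unset Implicit Arguments.

Theorem proposition2 (R : realType) (k : nat) :
  (fun n : nat => expect_n n (fun t => ((S2 t)%:R : R) ^- k)
                  / ((n%:R / 4) ^- k)) @ \oo --> (1 : R).
Proof.
apply: cvg_from_eps => e e0.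
have [D' hD'] := @natbig R (2 * k%:R * 2 ^+ k / e).
pose D := D'.+1.
have hD : (1 <= D)%N by [].
have [w [y [w0 w1 y0 yw hy]]] := params' R hD.
pose x := w ^+ (4 * D.+1).
have x0 : 0 <= x by apply: exprn_ge0; exact: ltW.
have x1 : x <= 1 by apply: exprn_ile1 => //; exact: ltW.
pose N0 := (6 * D.+1 + 1)%N.
have wD0 : 0 < w ^+ D by apply: exprn_gt0.
pose rho := y / w ^+ D.
have rho0 : 0 <= rho by apply: divr_ge0; exact: ltW.
have rho1 : rho < 1 by rewrite /rho ltr_pdivrMr // mul1r.
have yN0 : 0 < y ^+ N0 by apply: exprn_gt0.
have e2 : 0 < e / 2 * (4 ^+ k * y ^+ N0).
  by apply: mulr_gt0; [lra|apply: mulr_gt0 => //; apply: exprn_gt0].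
have [NU hNU] := @polygeo R rho k _ rho0 rho1 e2.
have [NL hNL] := @natbig R (2 * k%:R / e).
exists (NU + NL + N0 + 2)%N => n hn.
have n2 : (2 <= n)%N by apply: leq_trans hn; apply: leq_addl.
have n1 : (1 <= n)%N by apply: leq_trans n2.
have nR : 0 < (n%:R : R) by rewrite ltr0n.
have -> : expect_n n (fun t => ((S2 t)%:R : R) ^- k) =
   (\sum_(t <- Omega n) ((ch t)%:R : R) ^- k) / W R n.
  by rewrite /expect_n; congr (_ / _); apply: eq_bigr => t _; rewrite S2_ch.
rewrite invrK.
pose Sg := \sum_(t <- Omega n) ((ch t)%:R : R) ^- k.
pose P := (n%:R / 4 : R) ^+ k.
rewrite -/Sg -/P.
have W0 := W_gt0 R n1.
have P0 : 0 < P by apply: exprn_gt0; lra.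
have hNLn : (NL <= n)%N by clear -hn; lia.
have hNUn : (NU <= n)%N by clear -hn; lia.
have hN0n : (N0 <= n)%N by clear -hn; lia.
apply/andP; split.
  have hl := lower R k n2.
  set M := (n%:R + 2) / 4 : R in hl.
  have M0 : 0 < M by rewrite /M; lra.
  have hM : M ^- k <= Sg / W R n by rewrite ler_pdivlMr.
  have h1 : M ^- k * P <= Sg / W R n * P by apply: ler_wpM2r => //; exact: ltW.
  have eq1 : M ^- k * P = (1 + (- (2 / (n%:R + 2)))) ^+ k.
    rewrite mulrC /P -expr_div_n; congr (_ ^+ _); rewrite /M; field; lra.
  have hb : -1 <= - (2 / (n%:R + 2)) :> R.
    have h2 : 2 / (n%:R + 2) <= (1 : R).
      rewrite ler_pdivrMr ?mul1r; lra.
    lra.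
  have hb2 := @bern R _ k hb.
  have hk : k%:R * (2 / (n%:R + 2)) <= e.
    have : (NL%:R : R) <= n%:R by rewrite ler_nat.
    rewrite ler_pdivrMr // in hNL.
    move=> h; rewrite mulrA ler_pdivrMr; last by lra.
    nra.
  lra.
pose B := D%:R * n%:R / (4 * D.+1%:R) : R.
pose wDn := w ^+ (D * n).
have wDn0 : 0 < wDn by apply: exprn_gt0.
have hup : Sg <= \sum_(t <- Omega n) (B ^- k + x ^+ ch t / wDn).
  by apply: ler_sum => t _; exact: (@upper_pt R (ch t) n D w k hD n1 w0 w1).
have eS : \sum_(t <- Omega n) (B ^- k + x ^+ ch t / wDn) = B ^- k * W R n + Gs n x / wDn.
  rewrite big_split /= -W_sum mulr_sumr; congr (_ + _); first by rewrite mulr1.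
  by rewrite /Gs mulr_suml.
rewrite eS in hup.
have hG := @Giter R N0 x y (ltn0Sn _) x0 x1 (ltW y0) hy (n - N0).
rewrite subnKC // in hG.
have hSW : Sg / W R n <= B ^- k + y ^+ (n - N0) / wDn.
  rewrite ler_pdivrMr //; apply: le_trans hup _.
  rewrite mulrDl; apply: lerD => //.
  have -> : Gs n x / wDn = (Gs n x / W R n) / wDn * W R n by field; apply/andP; split; exact: lt0r_neq0.
  apply: ler_wpM2r; first exact: ltW.
  by rewrite ler_pdivrMr // -mulrA mulVf ?mulr1 //; exact: lt0r_neq0.
have hSP : Sg / W R n * P <= B ^- k * P + y ^+ (n - N0) / wDn * P.
  by rewrite -mulrDl; apply: ler_wpM2r => //; exact: ltW.
have Dpos : 0 < (D%:R : R) by rewrite ltr0n.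
have T1 : B ^- k * P = (1 + (D%:R)^-1) ^+ k.
  rewrite mulrC /P -expr_div_n; congr (_ ^+ _); rewrite /B -natr1; field.
  by apply/and3P; split; apply: lt0r_neq0 => //; lra.
have hDinv0 : 0 <= (D%:R : R)^-1 by rewrite invr_ge0 ltW.
have hDinv1 : (D%:R : R)^-1 <= 1 by rewrite invf_le1 // ler1n.
have hpw := @powup R (D%:R)^-1 k hDinv0 hDinv1.
have hD2 : (D%:R : R)^-1 * k%:R * 2 ^+ k <= e / 2.
  have : (D'%:R : R) <= D%:R by rewrite ler_nat.
  rewrite ler_pdivrMr // in hD'.
  move=> h; rewrite -mulrA ler_pdivrMl // mulrA.
  nra.
have T2 : y ^+ (n - N0) / wDn * P = n%:R ^+ k * rho ^+ n / (4 ^+ k * y ^+ N0).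
  have ey : y ^+ n = y ^+ (n - N0) * y ^+ N0 by rewrite -exprD subnK.
  rewrite /wDn /P /rho exprM !expr_div_n ey.
  have a2 : w ^+ D ^+ n != 0 by apply: lt0r_neq0; apply: exprn_gt0.
  have a4 : (4 : R) ^+ k != 0 by apply: lt0r_neq0; apply: exprn_gt0.
  have a5 : y ^+ N0 != 0 by apply: lt0r_neq0.
  move: a2 a4 a5; move: (y ^+ (n - N0)) (w ^+ D ^+ n) (n%:R ^+ k) ((4 : R) ^+ k) (y ^+ N0).
  by move=> b1 b2 b3 b4 b5 h2 h4 h5; field; rewrite h2 h4 h5.
have hU := hNU n hNUn.
have hT2 : y ^+ (n - N0) / wDn * P <= e / 2.
  rewrite T2 ler_pdivrMr //; last by apply: mulr_gt0 => //; apply: exprn_gt0.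
have : 0 < (4 : R) ^+ k by apply: exprn_gt0.
lra.
Qed.
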